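(* Splitting forcing $\mathbb{SP}$ is weighted: for every $T\in\mathbb{SP}$ there is a weight $\rho$ on $T$ such that every tree $S$ with $S\le_\rho T$ belongs to $\mathbb{SP}$.
   Context: $S\subseteq 2^{<\omega}$ is fat if there is $m\in\omega$ such that for every $n\ge m$ there are $s,t\in S$ with $s(n)=0,t(n)=1$. For a tree $T\subseteq 2^{<\omega}$ and $s\in T$, $T_s=\{t\in T:t\subseteq s\text{ or }s\subseteq t\}$. $T$ is a splitting tree if $T_s$ is fat for every $s\in T$; $\mathbb{SP}$ is the set of splitting trees ordered by inclusion. A weight on a perfect tree $T$ is a map $\rho:T\times T\to[T]^{<\omega}$ with $\rho(s,t)\subseteq T_s\setminus T_t$ for all $s,t\in T$. For a tree $S$, $S\le_\rho T$ means $S\subseteq T$ and the set of $s_0\in S$ for which there is an injective sequence $(s_n)_{n\in\omega}$ in $S_{s_0}$ (starting at $s_0$) with $\rho(s_n,s_{n+1})\subseteq S$ for all $n$ is dense in $S$ (every node of $S$ has an extension in this set). *)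

(* Defs.v *)
(* Nodes of 2^{<omega} are finite bit sequences
   [seq bool]; the digit 0 is [false] and 1 is [true]. Subsets of 2^{<omega}
   are predicates [seq bool -> Prop]. *)
From mathcomp Require Import all_boot.
Set Implicit Arguments. Unset Strict Implicit. Unset Printing Implicit Defensive.

Definition node := seq bool.
Definition nodeset := node -> Prop.

Definition val_at (s : node) (n : nat) (b : bool) : Prop :=
  n < size s /\ nth false s n = b.

Definition fat (S : nodeset) : Prop :=
  exists m : nat, forall n : nat, m <= n ->
    exists s t : node, S s /\ S t /\ val_at s n false /\ val_at t n true.

Definition is_tree (T : nodeset) : Prop :=
  (exists s, T s) /\ (forall s t : node, T t -> prefix s t -> T s).

Definition subtree (T : nodeset) (s : node) : nodeset :=
  fun t => T t /\ (prefix t s \/ prefix s t).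

Definition splitting_tree (T : nodeset) : Prop :=
  is_tree T /\ forall s, T s -> fat (subtree T s).

Definition SP (T : nodeset) : Prop := splitting_tree T.

Definition perfect_tree (T : nodeset) : Prop :=
  is_tree T /\ forall s, T s -> exists t u : node,
    T t /\ T u /\ prefix s t /\ prefix s u /\ ~~ prefix t u /\ ~~ prefix u t.

(* a weight on a perfect tree T: rho(s,t) is a finite subset (given as a list)
   of T_s \ T_t for all s, t in T *)
Definition weight (T : nodeset) (rho : node -> node -> seq node) : Prop :=
  perfect_tree T /\
  forall s t : node, T s -> T t ->
    forall u : node, u \in rho s t -> subtree T s u /\ ~ subtree T t u.

Definition rho_le (rho : node -> node -> seq node) (S T : nodeset) : Prop :=
  (forall s, S s -> T s) /\
  (forall s, S s -> exists s0, S s0 /\ prefix s s0 /\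
     exists f : nat -> node,
       injective f /\ f 0 = s0 /\ (forall n, subtree S s0 (f n)) /\
       (forall n u, u \in rho (f n) (f n.+1) -> S u)).

(* Main.v *)
From Stdlib Require Import Classical ClassicalEpsilon.
Require Import Defs.
From mathcomp Require Import all_boot.

Set Implicit Arguments. Unset Strict Implicit. Unset Printing Implicit Defensive.

Lemma pre_nth (t u : node) n : prefix t u -> n < size t -> nth false u n = nth false t n.
Proof. by move/prefixP=> [w ->] h; rewrite nth_cat h. Qed.

Lemma pre_common (a b u : node) : prefix a u -> prefix b u -> size a <= size b -> prefix a b.
Proof.
move/prefixP=> [x ->] hb hs; rewrite prefixE.
move: hb; rewrite prefixE => /eqP <-.
by rewrite take_takel // take_size_cat.
Qed.

Lemma cmp_ext (p u : node) : (prefix u p \/ prefix p u) -> size p <= size u -> prefix p u.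
Proof.
case=> // h hs.
have e : size u = size p by apply/eqP; rewrite eqn_leq hs size_prefix.
move: h; rewrite prefixE e take_size => /eqP ->; exact: prefix_refl.
Qed.

Lemma val_cmp (u w : node) n : (prefix u w \/ prefix w u) -> n < size u -> n < size w ->
  nth false u n = nth false w n.
Proof. case=> h h1 h2; [by rewrite (pre_nth h h1) | by rewrite (pre_nth h h2)]. Qed.

Definition fatP (A : nodeset) m := forall n, m <= n ->
    exists s t : node, A s /\ A t /\ val_at s n false /\ val_at t n true.

Lemma fat_b A m n b : fatP A m -> m <= n -> exists w, A w /\ val_at w n b.
Proof.
move=> h hn; have [x [y [Ax [Ay [vx vy]]]]] := h n hn.
by case: b; [exists y | exists x].
Qed.

Definition thr (T : nodeset) (t : node) : nat :=
  epsilon (inhabits 0) (fun m => fatP (subtree T t) m).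

Lemma thrP T t : fat (subtree T t) -> fatP (subtree T t) (thr T t).
Proof. move=> h; exact: (epsilon_spec (inhabits 0) (fun m => fatP (subtree T t) m) h). Qed.

Definition decb (P : Prop) : bool := if excluded_middle_informative P then true else false.
Lemma decbP P : decb P = true <-> P.
Proof. by rewrite /decb; case: excluded_middle_informative. Qed.

Fixpoint lenk k : seq (seq bool) :=
  if k is k'.+1 then map (cons false) (lenk k') ++ map (cons true) (lenk k') else [:: [::]].
Definition allupto B := flatten [seq lenk k | k <- iota 0 B.+1].

Lemma mem_lenk (s : seq bool) : s \in lenk (size s).
Proof.
elim: s => [|b s IH] /=; first by rewrite in_cons eqxx.
have inj : forall c : bool, injective (cons c) by move=> c x y [].
by rewrite mem_cat; case: b; rewrite (mem_map (inj _)) IH ?orbT.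
Qed.

Lemma mem_allupto (s : seq bool) B : size s <= B -> s \in allupto B.
Proof.
move=> h; apply/flatten_mapP; exists (size s); last exact: mem_lenk.
by rewrite mem_iota add0n ltnS h.
Qed.

Definition rhoT (T : nodeset) (s t : node) : seq node :=
  [seq u <- allupto (thr T t) | decb (subtree T s u /\ ~ subtree T t u)].

Lemma unbounded (f : nat -> node) : injective f -> forall n, exists k, n < size (f k).
Proof.
move=> finj n; apply: NNPP => H.
have Hall : forall k, f k \in allupto n.
  move=> k; apply: mem_allupto; rewrite leqNgt; apply/negP => h; apply: H; by exists k.
have := @uniq_leq_size _ (map f (iota 0 (size (allupto n)).+1)) (allupto n).
rewrite (map_inj_uniq finj) iota_uniq size_map size_iota ltnn => /(_ isT).
move=> X; suff : false by []; apply: X => y /mapP [k _ ->]; exact: Hall.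
Qed.

Lemma switch (Q : nat -> Prop) J : Q 0 -> ~ Q J -> exists j, Q j /\ ~ Q j.+1.
Proof.
move=> Q0; elim: J => [|J IH] hJ; first by [].
case: (classic (Q J)) => h; first by exists J.
exact: IH.
Qed.

Theorem lemma4p10 :
  forall T : nodeset, SP T ->
    exists rho : node -> node -> seq node,
      weight T rho /\
      forall S : nodeset, is_tree S -> rho_le rho S T -> SP S.
Proof.
move=> T [[Tne Tcl] Tfat]; exists (rhoT T); split.
  split.
    split; first by split.
    move=> s Ts; have [m Hm] := Tfat s Ts.
    have [t [u [[Tt ct] [[Tu cu] [[lt vt] [lu vu]]]]]] := Hm (maxn m (size s)) (leq_maxl _ _).
    have hs : size s <= maxn m (size s) by apply: leq_maxr.
    exists t, u; split=> //; split=> //; split.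
      by apply: cmp_ext ct _; apply: leq_trans (ltnW lt).
    split; first by apply: cmp_ext cu _; apply: leq_trans (ltnW lu).
    split; apply/negP => h.
      by move: (pre_nth h lt); rewrite vt vu.
    by move: (pre_nth h lu); rewrite vt vu.
  move=> s t _ _ u; rewrite mem_filter => /andP [/decbP H _]; exact H.
move=> S Str [SsubT Hle]; split; first exact Str.
move=> s Ss.
have [s0 [Ss0 [pss0 [f [finj [f0 [fsub frho]]]]]]] := Hle s Ss.
have Ts0 := SsubT s0 Ss0.
have fat0 := thrP (Tfat s0 Ts0).
exists (maxn (thr T s0) (size s0)) => n hn.
have hm0 : thr T s0 <= n by apply: leq_trans hn; apply: leq_maxl.
have hsz0 : size s0 <= n by apply: leq_trans hn; apply: leq_maxr.
suff key : forall b, exists w, subtree S s w /\ val_at w n b.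
  have [w0 [h0 v0]] := key false; have [w1 [h1 v1]] := key true.
  by exists w0, w1.
move=> b.
pose Q j := exists u, subtree T (f j) u /\ prefix s0 u /\ val_at u n b.
have QP : forall t, prefix t s0 -> exists u, subtree T t u /\ prefix s0 u /\ val_at u n b.
  move=> t pts0.
  have [u [[Tu cu] vu]] := fat_b b fat0 hm0.
  have p : prefix s0 u by apply: cmp_ext cu _; apply: leq_trans (ltnW vu.1).
  exists u; split; last by [].
  split=> //; right; exact: prefix_trans pts0 p.
have Q0 : Q 0 by rewrite /Q f0; apply: QP; apply: prefix_refl.
have [J hJ] := unbounded finj n.
have [SJ cJ] := fsub J.
have pJ : prefix s0 (f J) by apply: cmp_ext cJ _; apply: leq_trans (ltnW hJ).
case: (boolP (nth false (f J) n == b)) => eJ.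
  exists (f J); split; last by split=> //; apply/eqP.
  split=> //; right; exact: prefix_trans pss0 pJ.
have nQJ : ~ Q J.
  move=> [u [[Tu cu] [_ [lu vu]]]].
  have := val_cmp cu lu hJ; rewrite vu => e; by rewrite e eqxx in eJ.
have [j [Qj nQj1]] := switch Q0 nQJ.
have [St ct] := fsub j.+1.
have Tt := SsubT _ St.
have pt : prefix s0 (f j.+1).
  case: ct => // h; exfalso; apply: nQj1; exact: QP.
have [u [[Tu cu] [ps0u [lu vu]]]] := Qj.
pose v := take n.+1 u.
have pvu : prefix v u by apply: prefix_take.
have szv : size v = n.+1 by rewrite /v size_take; case: ltnP => h //; apply/eqP; rewrite eqn_leq h lu.
have Tv : T v by apply: Tcl pvu.
have vv : val_at v n b by split; [rewrite szv | rewrite /v nth_take].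
have ps0v : prefix s0 v by apply: pre_common ps0u pvu _; rewrite szv; apply: leq_trans hsz0 _.
have cv : prefix v (f j) \/ prefix (f j) v.
  case: cu => h; first by left; apply: prefix_trans pvu h.
  case: (leqP (size v) (size (f j))) => hh.
    by left; apply: pre_common pvu h hh.
  by right; apply: pre_common h pvu (ltnW hh).
have nTtv : ~ subtree T (f j.+1) v.
  move=> h; apply: nQj1; exists v; by split.
have hthr : n < thr T (f j.+1).
  rewrite ltnNge; apply/negP => hle.
  have [w [[Tw cw] vw]] := fat_b b (thrP (Tfat _ Tt)) hle.
  apply: nQj1; exists w; split; first by split.
  split=> //.
  case: cw => h; last exact: prefix_trans pt h.
  apply: pre_common pt h _; apply: leq_trans hsz0 (ltnW vw.1).
have vin : v \in rhoT T (f j) (f j.+1).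
  rewrite mem_filter; apply/andP; split.
    by apply/decbP; split=> //; split.
  by apply: mem_allupto; rewrite szv.
have Sv := frho j v vin.
exists v; split=> //; split=> //; right; exact: prefix_trans pss0 ps0v.
Qed.
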